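(* Let $\lambda\in[-1,1/d)$ and let $\gamma:I\to\mathbb{R}^d$ be a continuous $\lambda$-curve. Then there exists $\rho>0$ such that for every $t\in I$ and every $q\in\mathrm{sec}^+(t)$ there exists $\xi_t\in\mathbb{S}^{d-1}$ with $\langle\xi_t,u\rangle\le-\rho$ for all $u\in K(t)$ with $\|u\|=1$, and $\langle\xi_t,q\rangle\ge\rho$.
   Context: $\mathbb{R}^d$ carries the Euclidean inner product $\langle\cdot,\cdot\rangle$ and norm $\|\cdot\|$; $I\subset\mathbb{R}$ is an interval; $\mathbb{S}^{d-1}$ the unit sphere. $\gamma$ is a $\lambda$-curve if for all $t_1\le t_2\le t_3$ in $I$: $\|\gamma(t_1)-\gamma(t_2)\|\le\|\gamma(t_1)-\gamma(t_3)\|+\lambda\|\gamma(t_2)-\gamma(t_3)\|$. $K(t)$ is the closed convex cone generated by $\{\gamma(t')-\gamma(t): t'\in I, t'\le t\}$. $\mathrm{sec}^+(t)=\{q\in\mathbb{S}^{d-1}: q=\lim_k\frac{\gamma(t_k)-\gamma(t)}{\|\gamma(t_k)-\gamma(t)\|}$ for some $t_k\to t$, $t_k>t\}$. *)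

(* Defs.v *)
From HB Require Import structures.
From mathcomp Require Import all_boot all_order all_algebra.
From mathcomp Require Import reals.
Set Implicit Arguments. Unset Strict Implicit. Unset Printing Implicit Defensive.
Import Order.TTheory GRing.Theory Num.Theory.
Local Open Scope ring_scope.

Section Defs.
Variables (R : realType) (d : nat).
Notation vec := 'rV[R]_d.

Definition dotv (u v : vec) : R := \sum_(i < d) u 0 i * v 0 i.
Definition enorm (u : vec) : R := Num.sqrt (dotv u u).

Definition on_sphere (q : vec) : Prop := enorm q = 1.

Definition is_interval_set (I : R -> Prop) : Prop :=
  forall x y z, I x -> I z -> x <= y -> y <= z -> I y.

Definition continuous_on (I : R -> Prop) (gamma : R -> vec) : Prop :=
  forall t, I t -> forall eps, 0 < eps -> exists2 delta, 0 < delta &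
    forall s, I s -> `|s - t| < delta -> enorm (gamma s - gamma t) < eps.

Definition lambda_curve (lam : R) (I : R -> Prop) (gamma : R -> vec) : Prop :=
  forall t1 t2 t3, I t1 -> I t2 -> I t3 -> t1 <= t2 -> t2 <= t3 ->
    enorm (gamma t1 - gamma t2)
      <= enorm (gamma t1 - gamma t3) + lam * enorm (gamma t2 - gamma t3).

Definition cone_hull (S : vec -> Prop) (u : vec) : Prop :=
  exists n (c : 'I_n -> R) (v : 'I_n -> vec),
    (forall i, 0 <= c i) /\ (forall i, S (v i)) /\ u = \sum_(i < n) c i *: v i.

Definition eclosure (S : vec -> Prop) (u : vec) : Prop :=
  forall eps, 0 < eps -> exists2 w, S w & enorm (u - w) < eps.

Definition Kcone (I : R -> Prop) (gamma : R -> vec) (t : R) : vec -> Prop :=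
  eclosure (cone_hull (fun v => exists t', [/\ I t', t' <= t & v = gamma t' - gamma t])).

Definition sec_plus (I : R -> Prop) (gamma : R -> vec) (t : R) (q : vec) : Prop :=
  on_sphere q /\
  exists tk : nat -> R,
    (forall k, I (tk k) /\ t < tk k /\ gamma (tk k) != gamma t) /\
    (forall eps, 0 < eps -> exists N, forall k, (N <= k)%N -> `|tk k - t| < eps) /\
    (forall eps, 0 < eps -> exists N, forall k, (N <= k)%N ->
       enorm ((enorm (gamma (tk k) - gamma t))^-1 *: (gamma (tk k) - gamma t) - q) < eps).

End Defs.

(* Main.v *)
Require Import Defs.
From HB Require Import structures.
From mathcomp Require Import all_boot all_order all_algebra.
From mathcomp Require Import classical_sets reals.
From mathcomp Require Import ring lra.
Import Order.TTheory GRing.Theory Num.Theory.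
Local Open Scope ring_scope.
Set Implicit Arguments. Unset Strict Implicit. Unset Printing Implicit Defensive.

Section Vec.
Variables (R : realType) (d : nat).
Notation vec := 'rV[R]_d.
Implicit Types u v w : vec.

Lemma dotC u v : dotv u v = dotv v u.
Proof. by apply: eq_bigr => i _; rewrite mulrC. Qed.

Lemma dotDl u v w : dotv (u + v) w = dotv u w + dotv v w.
Proof. by rewrite /dotv -big_split; apply: eq_bigr => i _; rewrite mxE mulrDl. Qed.

Lemma dotZl (c : R) u v : dotv (c *: u) v = c * dotv u v.
Proof. by rewrite /dotv mulr_sumr; apply: eq_bigr => i _; rewrite mxE mulrA. Qed.

Lemma dotNl u v : dotv (- u) v = - dotv u v.
Proof. by rewrite -scaleN1r dotZl mulN1r. Qed.

Lemma dotBl u v w : dotv (u - v) w = dotv u w - dotv v w.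
Proof. by rewrite dotDl dotNl. Qed.

Lemma dotDr u v w : dotv w (u + v) = dotv w u + dotv w v.
Proof. by rewrite dotC dotDl !(dotC w). Qed.
Lemma dotZr (c : R) u v : dotv v (c *: u) = c * dotv v u.
Proof. by rewrite dotC dotZl dotC. Qed.
Lemma dotNr u v : dotv v (- u) = - dotv v u.
Proof. by rewrite dotC dotNl dotC. Qed.
Lemma dotBr u v w : dotv w (u - v) = dotv w u - dotv w v.
Proof. by rewrite dotDr dotNr. Qed.

Lemma dot0l v : dotv 0 v = 0.
Proof. by rewrite -(scale0r 0) dotZl mul0r. Qed.

Lemma dot_suml (T : Type) (s : seq T) (F : T -> vec) v :
  dotv (\sum_(p <- s) F p) v = \sum_(p <- s) dotv (F p) v.
Proof.
elim: s => [|x s IH]; first by rewrite !big_nil dot0l.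
by rewrite !big_cons dotDl IH.
Qed.

Lemma dot_sumr (T : Type) (s : seq T) (F : T -> vec) v :
  dotv v (\sum_(p <- s) F p) = \sum_(p <- s) dotv v (F p).
Proof. by rewrite dotC dot_suml; apply: eq_bigr => p _; rewrite dotC. Qed.

Lemma dot_ge0 u : 0 <= dotv u u.
Proof. by apply: sumr_ge0 => i _; rewrite -expr2 sqr_ge0. Qed.

Lemma dot_eq0 u : dotv u u = 0 -> u = 0.
Proof.
move=> h; apply/rowP => i; rewrite mxE.
have {}h : \sum_(j < d) u 0 j ^+ 2 = 0 by rewrite -[RHS]h; apply: eq_bigr => j _; rewrite expr2.
have := @psumr_eq0P _ _ xpredT (fun j => u 0 j ^+ 2) (fun j _ => sqr_ge0 (u 0 j)) h i isT.
by move/eqP; rewrite sqrf_eq0 => /eqP.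
Qed.

Lemma dot_gt0 u : u != 0 -> 0 < dotv u u.
Proof.
move=> nz; rewrite lt_def dot_ge0 andbT; apply/eqP => /dot_eq0 h.
by rewrite h eqxx in nz.
Qed.

Lemma enorm_ge0 u : 0 <= enorm u.
Proof. exact: sqrtr_ge0. Qed.

Lemma enorm_sq u : enorm u ^+ 2 = dotv u u.
Proof. by rewrite /enorm sqr_sqrtr // dot_ge0. Qed.

Lemma enorm_gt0 u : u != 0 -> 0 < enorm u.
Proof. by move=> /dot_gt0; rewrite /enorm sqrtr_gt0. Qed.

Lemma enormN u : enorm (- u) = enorm u.
Proof. by rewrite /enorm dotNl dotNr opprK. Qed.

Lemma enormZ (c : R) u : 0 <= c -> enorm (c *: u) = c * enorm u.
Proof.
move=> c0; rewrite /enorm dotZl dotZr mulrA -expr2 sqrtrM ?sqr_ge0 //.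
by rewrite sqrtr_sqr ger0_norm.
Qed.

Lemma enorm_eq1 u : dotv u u = 1 -> enorm u = 1.
Proof. by rewrite /enorm => ->; rewrite sqrtr1. Qed.

Lemma dot_unit_le1 u v : dotv u u = 1 -> dotv v v = 1 -> dotv u v <= 1.
Proof.
move=> hu hv; have := dot_ge0 (u - v).
rewrite dotBl !dotBr hu hv (dotC v u); lra.
Qed.

Lemma CS u v : dotv u v <= enorm u * enorm v.
Proof.
have [->|nu] := eqVneq u 0; first by rewrite dot0l mulr_ge0 ?enorm_ge0.
have [->|nv] := eqVneq v 0; first by rewrite dotC dot0l mulr_ge0 ?enorm_ge0.
have A0 := enorm_gt0 nu; have B0 := enorm_gt0 nv.
have := dot_ge0 (enorm v *: u - enorm u *: v).
rewrite dotBl !dotBr !dotZl !dotZr -!enorm_sq (dotC v u).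
set A := enorm u; set B := enorm v; set D := dotv u v => h.
have : 0 <= (A * B) * (2 * (A * B - D)) by nra.
by rewrite pmulr_rge0 ?mulr_gt0 //; lra.
Qed.

Lemma CS' u v : - (enorm u * enorm v) <= dotv u v.
Proof. by have := CS u (- v); rewrite dotNr enormN; lra. Qed.

Lemma enorm_triangle u v : enorm (u + v) <= enorm u + enorm v.
Proof.
rewrite -(ler_pXn2r (n:=2)) ?nnegrE ?addr_ge0 ?enorm_ge0 //.
rewrite enorm_sq dotDl !dotDr -!enorm_sq (dotC v u).
have := CS u v; nra.
Qed.

End Vec.


Section Gram.
Variables (R : realType) (d : nat).
Notation vec := 'rV[R]_d.

Lemma sum_sq_ge (x : 'I_d -> R) : (0 < d)%N ->
  (\sum_(i < d) x i) ^+ 2 <= d%:R * \sum_(i < d) x i ^+ 2.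
Proof.
move=> d0; set T := \sum_(i < d) x i.
have h : 0 <= \sum_(i < d) (x i * d%:R - T) ^+ 2 by apply: sumr_ge0 => i _; apply: sqr_ge0.
have e : \sum_(i < d) (x i * d%:R - T) ^+ 2 =
   d%:R ^+ 2 * \sum_(i < d) x i ^+ 2 - 2%:R * d%:R * T * T + d%:R * T ^+ 2.
  rewrite (eq_bigr (fun i => d%:R ^+ 2 * x i ^+ 2 - 2%:R * d%:R * T * x i + T ^+ 2));
    last by move=> i _; ring.
  rewrite big_split /= sumrB /= -!mulr_sumr sumr_const card_ord -/T.
  by rewrite -[T *+ d]mulr_natr; ring.
rewrite e in h.
have dp : 0 < d%:R :> R by rewrite ltr0n.
have : 0 <= d%:R * (d%:R * \sum_(i < d) x i ^+ 2 - T ^+ 2) by nra.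
by rewrite pmulr_rge0 // subr_ge0.
Qed.

Variable s : seq (R * vec).

Lemma gram_sq :
  \sum_(p <- s) \sum_(q <- s) p.1 * q.1 * dotv p.2 q.2 ^+ 2 =
  \sum_(i < d) \sum_(j < d) (\sum_(p <- s) p.1 * (p.2 0 i * p.2 0 j)) ^+ 2.
Proof.
transitivity (\sum_(p <- s) \sum_(q <- s) \sum_(i < d) \sum_(j < d)
   (p.1 * (p.2 0 i * p.2 0 j)) * (q.1 * (q.2 0 i * q.2 0 j))).
  apply: eq_bigr => p _; apply: eq_bigr => q _.
  rewrite expr2 /dotv mulr_suml mulr_sumr; apply: eq_bigr => i _.
  rewrite mulr_sumr mulr_sumr; apply: eq_bigr => j _; ring.
symmetry.
transitivity (\sum_(i < d) \sum_(j < d) \sum_(p <- s) \sum_(q <- s)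
   (p.1 * (p.2 0 i * p.2 0 j)) * (q.1 * (q.2 0 i * q.2 0 j))).
  apply: eq_bigr => i _; apply: eq_bigr => j _.
  rewrite expr2 mulr_suml; apply: eq_bigr => p _; by rewrite mulr_sumr.
rewrite exchange_big /=.
under eq_bigr do rewrite exchange_big /=.
under eq_bigr do under eq_bigr do rewrite exchange_big /=.
rewrite exchange_big /=; apply: eq_bigr => p _.
rewrite exchange_big /=; apply: eq_bigr => q _.
by rewrite exchange_big.
Qed.

Lemma trace_gram :
  \sum_(i < d) (\sum_(p <- s) p.1 * (p.2 0 i * p.2 0 i)) =
  \sum_(p <- s) p.1 * dotv p.2 p.2.
Proof.
rewrite exchange_big /=; apply: eq_bigr => p _.
by rewrite /dotv mulr_sumr.
Qed.

Lemma gram_lb : (0 < d)%N ->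
  (\sum_(p <- s) p.1 * dotv p.2 p.2) ^+ 2 <=
  d%:R * \sum_(p <- s) \sum_(q <- s) p.1 * q.1 * dotv p.2 q.2 ^+ 2.
Proof.
move=> d0; rewrite gram_sq -trace_gram.
apply: (le_trans (sum_sq_ge _ d0)).
rewrite ler_pM2l ?ltr0n //; apply: ler_sum => i _.
rewrite (bigD1 i) //= lerDl; apply: sumr_ge0 => j _; exact: sqr_ge0.
Qed.

End Gram.


Lemma ler_sum_in (R : realType) (T : eqType) (s : seq T) (F G : T -> R) :
  (forall p, p \in s -> F p <= G p) -> \sum_(p <- s) F p <= \sum_(p <- s) G p.
Proof. by move=> h; rewrite !big_seq; apply: ler_sum. Qed.

Section Core.
Variables (R : realType) (d : nat) (lam : R) (U : 'rV[R]_d -> Prop).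
Notation vec := 'rV[R]_d.
Hypotheses (d0 : (0 < d)%N) (lamge : -1 <= lam) (lamlt : lam < d%:R^-1)
  (U1 : forall x, U x -> dotv x x = 1)
  (Upair : forall x y, U x -> U y -> - lam <= dotv x y).

Definition good (s : seq (R * vec)) :=
  (forall p, p \in s -> 0 <= p.1 /\ U p.2) /\ \sum_(p <- s) p.1 = 1.
Definition comb (s : seq (R * vec)) := \sum_(p <- s) p.1 *: p.2.

Lemma comb_norm s : dotv (comb s) (comb s) =
  \sum_(p <- s) \sum_(q <- s) p.1 * q.1 * dotv p.2 q.2.
Proof.
rewrite /comb dot_suml; apply: eq_bigr => p _.
rewrite dotZl dot_sumr mulr_sumr; apply: eq_bigr => q _.
by rewrite dotZr; ring.
Qed.

Definition delta2 := (d%:R^-1 - lam) / (1 - lam).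

Lemma dinv_le1 : d%:R^-1 <= 1 :> R.
Proof. by rewrite invr_le1 ?ler1n ?unitfE ?pnatr_eq0 -?lt0n ?ltr0n. Qed.

Lemma lam_lt1 : lam < 1.
Proof. exact: (lt_le_trans lamlt dinv_le1). Qed.

Lemma delta2_gt0 : 0 < delta2.
Proof. by rewrite /delta2 divr_gt0 // subr_gt0 // lam_lt1. Qed.

Lemma delta2_le1 : delta2 <= 1.
Proof.
rewrite /delta2 ler_pdivrMr ?subr_gt0 ?lam_lt1 // mul1r.
by have := dinv_le1; lra.
Qed.

Lemma unit_le1 x y : U x -> U y -> dotv x y <= 1.
Proof. by move=> ux uy; apply: dot_unit_le1; apply: U1. Qed.

Lemma sum_aa (s : seq (R * vec)) : \sum_(p <- s) p.1 = 1 ->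
  \sum_(p <- s) \sum_(q <- s) p.1 * q.1 = 1.
Proof.
move=> hsum; rewrite -[RHS]hsum; apply: eq_bigr => p _; by rewrite -mulr_sumr hsum mulr1.
Qed.

Lemma comb_lb s : good s -> delta2 <= dotv (comb s) (comb s).
Proof.
move=> [hs hsum]; rewrite comb_norm.
set G := \sum_(p <- s) \sum_(q <- s) p.1 * q.1 * dotv p.2 q.2.
have t1 : \sum_(p <- s) p.1 * dotv p.2 p.2 = 1.
  rewrite -hsum big_seq [RHS]big_seq; apply: eq_bigr => p ps.
  by rewrite U1 ?mulr1 //; case: (hs p ps).
have := gram_lb s d0; rewrite t1 expr1n.
set G2 := \sum_(p <- s) \sum_(q <- s) _ => h1.
have h2 : G2 <= \sum_(p <- s) \sum_(q <- s) p.1 * q.1 * ((1 - lam) * dotv p.2 q.2 + lam).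
  apply: ler_sum_in => p ps; apply: ler_sum_in => q qs.
  have [p0 up] := hs p ps; have [q0 uq] := hs q qs.
  apply: ler_wpM2l; first exact: mulr_ge0.
  have := Upair up uq; have := unit_le1 up uq; nra.
have e : \sum_(p <- s) \sum_(q <- s) p.1 * q.1 * ((1 - lam) * dotv p.2 q.2 + lam)
    = (1 - lam) * G + lam.
  rewrite (eq_bigr (fun p => \sum_(q <- s) ((1 - lam) * (p.1 * q.1 * dotv p.2 q.2) + lam * (p.1 * q.1)))); last first.
    by move=> p _; apply: eq_bigr => q _; ring.
  under eq_bigr do rewrite big_split /= -!mulr_sumr.
  rewrite big_split /= -!mulr_sumr hsum.
  by rewrite [X in lam * X](eq_bigr (fun i => i.1)) ?hsum ?mulr1 // => i _; rewrite mulr1.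
rewrite e in h2.
have dp : 0 < d%:R :> R by rewrite ltr0n.
have h3 : d%:R^-1 <= G2.
  by rewrite -(ler_pM2l dp) mulfV ?gt_eqF.
rewrite /delta2 ler_pdivrMr ?subr_gt0 ?lam_lt1 //; lra.
Qed.

Lemma comb_ub s : good s -> dotv (comb s) (comb s) <= 1.
Proof.
move=> [hs hsum]; rewrite comb_norm.
apply: (@le_trans _ _ (\sum_(p <- s) \sum_(q <- s) p.1 * q.1)).
  apply: ler_sum_in => p ps; apply: ler_sum_in => q qs.
  have [p0 up] := hs p ps; have [q0 uq] := hs q qs.
  rewrite -[X in _ <= X]mulr1; apply: ler_wpM2l; first exact: mulr_ge0.
  exact: unit_le1.
by rewrite sum_aa.
Qed.

Lemma comb_dot s x : good s -> U x -> - lam <= dotv x (comb s).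
Proof.
move=> [hs hsum] ux; rewrite /comb dot_sumr.
apply: (@le_trans _ _ (\sum_(p <- s) p.1 * - lam)).
  by rewrite -mulr_suml hsum mul1r.
apply: ler_sum_in => p ps; have [p0 up] := hs p ps.
rewrite dotZr; apply: ler_wpM2l => //; exact: Upair.
Qed.

Lemma comb_step s x c : good s -> U x -> 0 <= c -> c <= 1 ->
  exists s', good s' /\ comb s' = (1 - c) *: comb s + c *: x.
Proof.
move=> [hs hsum] ux c0 c1.
exists ((c, x) :: [seq ((1 - c) * p.1, p.2) | p <- s]); split; first split.
- move=> p; rewrite inE => /orP[/eqP -> //|/mapP[p' p's ->]] /=.
  by have [? ?] := hs p' p's; split => //; apply: mulr_ge0; lra.
- by rewrite big_cons big_map /= -mulr_sumr hsum mulr1; ring.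
- rewrite /comb big_cons big_map /= scaler_sumr addrC; congr (_ + _).
  by apply: eq_bigr => p _; rewrite scalerA.
Qed.

Lemma core x0 : U x0 -> exists m : vec,
  [/\ 0 < dotv m m, dotv m m <= 1 & forall x, U x -> delta2 / 2%:R <= dotv m x].
Proof.
move=> ux0.
pose E := fun r : R => exists s, good s /\ r = dotv (comb s) (comb s).
have E0 : E (dotv (comb [:: (1, x0)]) (comb [:: (1, x0)])).
  exists [:: (1, x0)]; split => //; split.
    by move=> p; rewrite inE => /eqP -> /=; split.
  by rewrite big_cons big_nil addr0.
have hinf : has_inf E.
  split; first by exists (dotv (comb [:: (1, x0)]) (comb [:: (1, x0)])).
  by exists 0 => r [s [_ ->]]; apply: dot_ge0.
have dp := delta2_gt0; have d1 := delta2_le1.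
have [r [s [gs ->]] hr] := inf_adherent (eps := delta2 ^+ 2 / 32%:R) (divr_gt0 (exprn_gt0 2 dp) (ltr0n _ 32)) hinf.
exists (comb s); have lb := comb_lb gs; have ub := comb_ub gs.
split => //; first exact: lt_le_trans dp lb.
move=> x ux.
set c := delta2 / 8%:R.
have c0 : 0 <= c by rewrite divr_ge0 // ltW.
have c1 : c <= 1 by rewrite /c ler_pdivrMr ?ltr0n //; lra.
have [s' [gs' e']] := comb_step gs ux c0 c1.
have hinf' := ge_inf (proj2 hinf) (ex_intro (fun s0 => _) s' (conj gs' erefl)).
rewrite e' in hinf'.
move: hinf'; rewrite !dotDl !dotDr !dotZl !dotZr (U1 ux) (dotC x (comb s)).
have := comb_dot gs ux; rewrite dotC.
set A := dotv (comb s) (comb s) in lb ub hr *.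
set B := dotv (comb s) x.
set eta := inf E => hB hE.
have e1 : A - delta2 ^+ 2 / 32%:R < (1 - c) * ((1 - c) * A) + (1 - c) * (c * B) + (c * ((1 - c) * B) + c * (c * 1)) by lra.
rewrite /c in e1.
have lam1 := lam_lt1.
nra.
Qed.

End Core.

Section Main.
Variables (R : realType) (d : nat).
Notation vec := 'rV[R]_d.

Lemma dot0r (m : vec) : dotv m 0 = 0.
Proof. by rewrite dotC dot0l. Qed.

Lemma normalize_dot (a : vec) : a != 0 ->
  dotv ((enorm a)^-1 *: a) ((enorm a)^-1 *: a) = 1.
Proof.
move=> nz; have A0 := enorm_gt0 nz.
rewrite dotZl dotZr -enorm_sq mulrA -expr2 -exprMn mulVf ?gt_eqF // expr1n //.
Qed.

Lemma norm_sub_sq (u v : vec) :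
  enorm (u - v) ^+ 2 = enorm u ^+ 2 - dotv u v - (dotv u v - enorm v ^+ 2).
Proof. by rewrite !enorm_sq dotBl !dotBr (dotC v u). Qed.

Lemma diff3 (x y z : vec) : (x - z) - (y - z) = x - y.
Proof. by rewrite opprB addrA subrK. Qed.

Lemma pairA (lam : R) (a1 a2 : vec) : -1 <= lam -> lam <= 1 ->
  a1 != 0 -> a2 != 0 -> enorm (a1 - a2) <= enorm a1 + lam * enorm a2 ->
  - lam <= dotv ((enorm a1)^-1 *: a1) ((enorm a2)^-1 *: a2).
Proof.
move=> l1 l2 n1 n2 h.
have A1 := enorm_gt0 n1; have A2 := enorm_gt0 n2.
have E0 := enorm_ge0 (a1 - a2).
have Esq := enorm_sq (a1 - a2).
rewrite dotBl !dotBr -!enorm_sq (dotC a2 a1) in Esq.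
set E := enorm (a1 - a2) in h E0 Esq.
set B1 := enorm a1 in h A1 Esq *; set B2 := enorm a2 in h A2 Esq *.
have s1 : E ^+ 2 <= (B1 + lam * B2) ^+ 2.
  by rewrite ler_pXn2r ?nnegrE //; lra.
have s2 : 0 <= (1 - lam) * (1 + lam) * B2 ^+ 2.
  by apply: mulr_ge0; [apply: mulr_ge0; lra | apply: sqr_ge0].
have : - lam * (B1 * B2) <= dotv a1 a2 by nra.
rewrite dotZl dotZr mulrA -invfM => h2.
by rewrite ler_pdivlMl ?mulr_gt0 // mulrC.
Qed.


Lemma pairB (lam : R) (I : R -> Prop) (gamma : R -> vec) t q t' :
  -1 <= lam -> lam <= 1 -> continuous_on I gamma -> lambda_curve lam I gamma ->
  I t -> sec_plus I gamma t q -> I t' -> t' <= t -> gamma t' - gamma t != 0 ->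
  dotv ((enorm (gamma t' - gamma t))^-1 *: (gamma t' - gamma t)) q <= lam.
Proof.
move=> l1 l2 cont lc It [sq [tk [htk [htc hqc]]]] It' tt' nz.
set a := gamma t' - gamma t; set x := (enorm a)^-1 *: a.
have A0 := enorm_gt0 nz.
have x1 : enorm x = 1 by apply: enorm_eq1; apply: normalize_dot.
rewrite leNgt; apply/negP => hlt.
set eta := dotv x q - lam.
have eta0 : 0 < eta by rewrite /eta subr_gt0.
set eps1 := enorm a * eta / (2%:R + eta).
have eps10 : 0 < eps1 by rewrite /eps1 divr_gt0 ?mulr_gt0 //; lra.
have [del del0 hdel] := cont t It eps1 eps10.
have [N1 hN1] := htc del del0.
have [N2 hN2] := hqc (eta / 2%:R) (divr_gt0 eta0 (ltr0n _ 2)).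
pose k := maxn N1 N2.
have [Ik [ltk nzk]] := htk k.
have hB : enorm (gamma (tk k) - gamma t) < eps1.
  by apply: hdel => //; apply: hN1; rewrite leq_maxl.
have hq : enorm ((enorm (gamma (tk k) - gamma t))^-1 *: (gamma (tk k) - gamma t) - q) < eta / 2%:R.
  by apply: hN2; rewrite leq_maxr.
set b := gamma (tk k) - gamma t in hB hq nzk.
have hB' : enorm b * (2%:R + eta) < enorm a * eta.
  by move: hB; rewrite /eps1 ltr_pdivlMr; lra.
clear hB hdel.
have nzb : b != 0 by rewrite subr_eq0.
have B0 := enorm_gt0 nzb.
have hl := lc t' t (tk k) It' It Ik tt' (ltW ltk).
have e1 : gamma t' - gamma (tk k) = a - b by rewrite diff3.
have e2 : gamma t - gamma (tk k) = - b by rewrite opprB.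
rewrite e1 e2 enormN -/a in hl.
have Esq := norm_sub_sq a b.
have E0 := enorm_ge0 (a - b).
set E := enorm (a - b) in hl Esq E0.
set A := enorm a in A0 hl Esq hB' *.
set B := enorm b in B0 hl Esq hB' *.
set D := dotv a b in Esq.
have s1 : (A - lam * B) ^+ 2 <= E ^+ 2.
  have BA : B < A by nra.
  have lB : lam * B <= B by nra.
  rewrite ler_pXn2r ?nnegrE //; lra.
have s2 : 0 <= (1 - lam) * (1 + lam) * B ^+ 2.
  by apply: mulr_ge0; [apply: mulr_ge0; lra | apply: sqr_ge0].
have hD : 2%:R * D <= B ^+ 2 + 2%:R * lam * A * B by nra.
set y := (B^-1 *: b).
have hxy : dotv x y * (A * B) = D.
  by rewrite /x /y dotZl dotZr -/A -/B -/D; field; rewrite !gt_eqF.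
have hX : dotv x y * 2%:R * A <= B + 2%:R * lam * A.
  have : (dotv x y * 2%:R * A) * B <= (B + 2%:R * lam * A) * B.
    have -> : dotv x y * 2%:R * A * B = 2%:R * D by rewrite -hxy; ring.
    lra.
  by rewrite ler_pM2r.
have hC := CS' x (y - q).
rewrite x1 mul1r dotBr in hC.
have : dotv x q <= dotv x y + enorm (y - q) by lra.
rewrite /eta in eta0 hB' hq *.
move: hq; rewrite -/y => hq.
nra.
Qed.

End Main.

Unset Implicit Arguments. Set Strict Implicit.

Theorem lemma3p4 (R : realType) (d : nat) (lam : R) (I : R -> Prop)
  (gamma : R -> 'rV[R]_d) :
  -1 <= lam -> lam < 1 / d%:R ->
  is_interval_set I ->
  continuous_on I gamma ->
  lambda_curve lam I gamma ->
  exists2 rho : R, 0 < rho &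
    forall t, I t -> forall q, sec_plus I gamma t q ->
      exists xi : 'rV[R]_d,
        [/\ on_sphere xi,
            (forall u, Kcone I gamma t u -> enorm u = 1 -> dotv xi u <= - rho)
          & rho <= dotv xi q].
Proof.
move=> l1 l2 Iint cont lc.
case: d gamma l2 cont lc => [|d'] gamma l2 cont lc.
  exists 1 => // t It q [sq _]; exfalso.
  move: sq; rewrite /on_sphere /enorm /dotv big_ord0 sqrtr0 => /eqP.
  by rewrite eq_sym oner_eq0.
have d0 : (0 < d'.+1)%N by [].
rewrite div1r in l2.
have lam1 : lam <= 1 := ltW (lam_lt1 d0 l2).
exists (delta2 d'.+1 lam / 2%:R); first by rewrite divr_gt0 ?ltr0n ?delta2_gt0.
move=> t It q sp; have sp' := sp; case: sp' => [sq _].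
pose U x := (exists t', [/\ I t', t' <= t, gamma t' - gamma t != 0 &
   x = (enorm (gamma t' - gamma t))^-1 *: (gamma t' - gamma t)]) \/ x = - q.
have q1 : dotv q q = 1 by rewrite -enorm_sq sq expr1n.
have U1 : forall x, U x -> dotv x x = 1.
  move=> x [[t' [_ _ nz ->]] | ->]; first exact: normalize_dot.
  by rewrite dotNl dotNr opprK.
have gq : forall t', I t' -> t' <= t -> gamma t' - gamma t != 0 ->
    - lam <= dotv ((enorm (gamma t' - gamma t))^-1 *: (gamma t' - gamma t)) (- q).
  move=> t' It' tt' nz; rewrite dotNr.
  have := pairB l1 lam1 cont lc It sp It' tt' nz; lra.
have gg : forall t1 t2, I t1 -> I t2 -> t1 <= t2 -> t2 <= t ->
    gamma t1 - gamma t != 0 -> gamma t2 - gamma t != 0 ->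
    - lam <= dotv ((enorm (gamma t1 - gamma t))^-1 *: (gamma t1 - gamma t))
                  ((enorm (gamma t2 - gamma t))^-1 *: (gamma t2 - gamma t)).
  move=> t1 t2 I1 I2 t12 t2t n1 n2; apply: pairA => //.
  by rewrite diff3; apply: lc.
have Upair : forall x y, U x -> U y -> - lam <= dotv x y.
  move=> x y [[t1 [I1 t1t n1 ->]] | ->] [[t2 [I2 t2t n2 ->]] | ->].
  - case/orP: (le_total t1 t2) => h; first exact: gg.
    by rewrite dotC; apply: gg.
  - exact: gq.
  - by rewrite dotC; apply: gq.
  - by rewrite dotNl dotNr opprK q1; lra.
have [m [m0 m1 hm]] := core (U := U) d0 l2 U1 Upair (or_intror erefl).
set rho := delta2 d'.+1 lam / 2%:R in hm *.
have rho0 : 0 < rho by rewrite divr_gt0 ?ltr0n ?delta2_gt0.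
have nzm : m != 0 by apply/eqP => h; rewrite h dot0l ltxx in m0.
have M0 := enorm_gt0 nzm.
have M1 : enorm m <= 1 by rewrite /enorm -sqrtr1 ler_sqrt.
have Minv : 1 <= (enorm m)^-1 by rewrite invf_ge1.
have gen : forall t', I t' -> t' <= t ->
    rho * enorm (gamma t' - gamma t) <= dotv m (gamma t' - gamma t).
  move=> t' It' tt'.
  have [->|nz] := eqVneq (gamma t' - gamma t) 0.
    by rewrite dot0r /enorm dot0l sqrtr0 mulr0.
  have := hm _ (or_introl (ex_intro _ t' (And4 It' tt' nz erefl))).
  rewrite dotZr ler_pdivlMl ?enorm_gt0 //; lra.
have cone : forall v, cone_hull (fun v => exists t', [/\ I t', t' <= t & v = gamma t' - gamma t]) v ->
    rho * enorm v <= dotv m v.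
  move=> v [n [c [w [c0 [Sw ->]]]]].
  rewrite (big_morph _ (fun u v => dotDr u v m) (dot0r m)).
  have tri : enorm (\sum_(i < n) c i *: w i) <= \sum_(i < n) c i * enorm (w i).
    elim/big_rec2: _ => [|i x y _ Hy]; first by rewrite /enorm dot0l sqrtr0.
    apply: (le_trans (enorm_triangle _ _)); rewrite enormZ //; lra.
  apply: (le_trans (ler_wpM2l (ltW rho0) tri)).
  rewrite mulr_sumr; apply: ler_sum => i _.
  have [t' [It' tt' ->]] := Sw i.
  rewrite dotZr mulrCA; apply: ler_wpM2l => //; exact: gen.
have clos : forall u, Kcone I gamma t u -> enorm u = 1 -> rho <= dotv m u.
  move=> u hu u1; apply/ler_addgt0Pr => e e0.
  have e'0 : 0 < e / (rho + 1) by rewrite divr_gt0 //; lra.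
  have [w hw hd] := hu _ e'0.
  have cw := cone w hw.
  have tri : 1 <= enorm w + enorm (u - w).
    have e1 : u = w + (u - w) by rewrite addrC subrK.
    by rewrite -u1 [X in enorm X <= _]e1; apply: enorm_triangle.
  have cs := CS' m (u - w).
  rewrite dotBr in cs.
  have hd' : enorm (u - w) * (rho + 1) < e by rewrite -ltr_pdivlMr //; lra.
  have := enorm_ge0 (u - w).
  nra.
exists (- ((enorm m)^-1 *: m)); split.
- by rewrite /on_sphere enorm_eq1 // dotNl dotNr opprK normalize_dot.
- move=> u hu u1; rewrite dotNl dotZl.
  have := clos u hu u1; nra.
- rewrite dotNl dotZl.
  have := hm _ (or_intror erefl); rewrite dotNr; nra.
Qed.
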